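(* Let $X=L^\infty(\mathcal P)$ and assume that the family of all nonconstant rectifiable curves in $\mathcal P$ has zero $L^\infty$-modulus. Then $N^{1,\infty}(\mathcal P)=L^\infty(\mathcal P)$ and: (I) for every $E\subset\mathcal P$, $C_\infty(E)=0$ if $\mu(E)=0$ and $C_\infty(E)=1$ if $\mu(E)>0$; (II) if $A\subset\mathcal P$ is nonempty with $\mu(A)=0$, then $\chi_A\in N^{1,\infty}(\mathcal P)$ is weakly quasicontinuous but not quasicontinuous (so not every weakly quasicontinuous function is quasicontinuous); (III) if there is a closed set $F\subset\mathcal P$ with empty interior and $\mu(F)>0$, then $\chi_F\in N^{1,\infty}(\mathcal P)$ is not weakly quasicontinuous. Moreover, each of the following statements is equivalent to $\mu(\{x\})>0$ for every $x\in\mathcal P$: $C_\infty$ is an outer capacity; $C_\infty$ is a quasiouter capacity; every weakly quasicontinuous $u:\mathcal P\to[-\infty,\infty]$ is quasicontinuous; $C_\infty$ is an outer capacity for sets of zero capacity; $C_\infty(E)>0$ for every nonempty $E\subset\mathcal P$.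
   Context: Standing assumptions: $\mathcal P=(\mathcal P,d,\mu)$ is a metric space with a positive complete Borel measure $\mu$ such that $0<\mu(B)<\infty$ for every ball $B$; $\mu$ is extended as an outer measure to all subsets. $L^\infty(\mathcal P)$ is regarded as a space of everywhere-defined measurable functions with the (semi)norm $\|\cdot\|_{L^\infty}$. A family $\Gamma$ of curves has zero $L^\infty$-modulus if there is a Borel $\rho\in L^\infty(\mathcal P)$ with $\int_\gamma\rho\,ds=\infty$ for every $\gamma\in\Gamma$. A Borel $g:\mathcal P\to[0,\infty]$ is an upper gradient of $u:\mathcal P\to[-\infty,\infty]$ if $|u(\gamma(0))-u(\gamma(l_\gamma))|\le\int_\gamma g\,ds$ for every nonconstant rectifiable (arc-length parametrized) curve $\gamma:[0,l_\gamma]\to\mathcal P$. $N^{1,\infty}(\mathcal P)=\{u\in L^\infty:\|u\|_{N^{1,\infty}}:=\|u\|_{L^\infty}+\inf_g\|g\|_{L^\infty}<\infty\}$. $C_\infty(E)=\inf\{\|u\|_{N^{1,\infty}}:u\in N^{1,\infty},\ u\ge1\text{ on }E\}$. $C_\infty$ is a $c$-quasiouter capacity if $\inf\{C_\infty(G):G\supset E\text{ open}\}\le cC_\infty(E)$ for all $E$; quasiouter if for some $c\ge1$; outer if $c=1$; outer for sets of zero capacity if whenever $C_\infty(E)=0$ and $\varepsilon>0$ there is an open $G\supset E$ with $C_\infty(G)<\varepsilon$. $u$ is weakly quasicontinuous if for every $\varepsilon>0$ there is $E$ with $C_\infty(E)<\varepsilon$ and $u|_{\mathcal P\setminus E}$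 (real-valued) continuous; quasicontinuous if $E$ can be chosen open. *)

(* Defs.v *)
From HB Require Import structures.
From mathcomp Require Import all_boot all_order all_algebra.
From mathcomp Require Import all_classical all_reals all_analysis.
From mathcomp Require Import measurable_realfun ess_sup_inf.
Set Implicit Arguments.
Unset Strict Implicit.
Unset Printing Implicit Defensive.
Import Order.TTheory GRing.Theory Num.Theory.
Import numFieldNormedType.Exports.
Local Open Scope classical_set_scope.
Local Open Scope ring_scope.

Section mms.
Context {R : realType} {d0 : measure_display} {T : measurableType d0}.
Variable dist : T -> T -> R.
Variable mu : {measure set T -> \bar R}.

Definition dball (x : T) (r : R) : set T := [set y | dist x y < r].
Definition d_open (U : set T) : Prop :=
  forall x, U x -> exists2 r : R, 0 < r & dball x r `<=` U.
Definition d_closed (F : set T) : Prop := d_open (~` F).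
Definition d_borel : set (set T) := <<s d_open >>.
Definition borel_fun (f : T -> \bar R) : Prop :=
  forall B : set (\bar R), measurable B -> d_borel (f @^-1` B).

Definition metric_measure_space : Prop :=
  [/\ [/\ (forall x y, dist x y = 0 <-> x = y),
         (forall x y, dist x y = dist y x) &
         (forall x y z, dist x z <= dist x y + dist y z)],
      d_borel `<=` measurable,
      measure_is_complete mu &
      (forall x r, 0 < r -> (0 < mu (dball x r))%E /\ (mu (dball x r) < +oo)%E)].

Definition mu_out (E : set T) : \bar R :=
  ereal_inf [set mu A | A in [set A | measurable A /\ E `<=` A]].

Definition curve_length (gamma : R -> T) (a b : R) : \bar R :=
  ereal_sup [set l | exists (n : nat) (t : nat -> R),
     [/\ t 0%N = a, t n = b, (forall i, (i < n)%N -> t i <= t i.+1) &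
         l = (\sum_(i < n) dist (gamma (t i)) (gamma (t i.+1)))%:E]].

(** gamma : [0,l] -> T is a nonconstant rectifiable curve parametrized by
    arc length (values of gamma outside [0,l] are irrelevant) *)
Definition arclength_curve (gamma : R -> T) (l : R) : Prop :=
  0 < l /\ forall s t, 0 <= s -> s <= t -> t <= l ->
    curve_length gamma s t = (t - s)%:E.

Definition line_integral (gamma : R -> T) (l : R) (rho : T -> \bar R) : \bar R :=
  (\int[@lebesgue_measure R]_(t in [set t : R | (0 <= t <= l)%R]) rho (gamma t))%E.

Definition Linf_norm (u : T -> \bar R) : \bar R := ess_sup mu (fun x => `|u x|%E).
Definition in_Linf (u : T -> \bar R) : Prop :=
  measurable_fun [set: T] u /\ (Linf_norm u < +oo)%E.

(** zero L^infty-modulus of a family of curves (given as a predicate on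
    pairs (gamma, l)) *)
Definition Linf_modulus_zero (Gamma : (R -> T) -> R -> Prop) : Prop :=
  exists rho : T -> \bar R,
    [/\ borel_fun rho, (forall x, (0 <= rho x)%E), in_Linf rho &
        forall gamma l, Gamma gamma l -> line_integral gamma l rho = +oo%E].

(** upper gradients (with the usual convention that the integral must be
    infinite when one of the endpoint values is infinite) *)
Definition upper_gradient (u g : T -> \bar R) : Prop :=
  [/\ borel_fun g, (forall x, (0 <= g x)%E) &
      forall gamma l, arclength_curve gamma l ->
        let a := u (gamma 0) in let b := u (gamma l) in
        ((a \is a fin_num) && (b \is a fin_num) ->
           (`|fine a - fine b|%:E <= line_integral gamma l g)%E) /\
        (~~ ((a \is a fin_num) && (b \is a fin_num)) ->
           line_integral gamma l g = +oo%E)].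

Definition N1inf_norm (u : T -> \bar R) : \bar R :=
  (Linf_norm u + ereal_inf [set Linf_norm g | g in upper_gradient u])%E.
Definition in_N1inf (u : T -> \bar R) : Prop :=
  in_Linf u /\ (N1inf_norm u < +oo)%E.

Definition Cinf (E : set T) : \bar R :=
  ereal_inf [set N1inf_norm u |
             u in [set u | in_N1inf u /\ forall x, E x -> (1 <= u x)%E]].

Definition cont_off (E : set T) (u : T -> \bar R) : Prop :=
  (forall x, ~ E x -> u x \is a fin_num) /\
  forall x, ~ E x -> forall eps : R, 0 < eps -> exists2 delta : R, 0 < delta &
     forall y, ~ E y -> dist x y < delta -> `|fine (u y) - fine (u x)| < eps.

Definition weakly_quasicontinuous (u : T -> \bar R) : Prop :=
  forall eps : R, 0 < eps -> exists E, (Cinf E < eps%:E)%E /\ cont_off E u.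
Definition quasicontinuous (u : T -> \bar R) : Prop :=
  forall eps : R, 0 < eps -> exists E,
    [/\ d_open E, (Cinf E < eps%:E)%E & cont_off E u].

Definition c_quasiouter (c : R) : Prop :=
  forall E, (ereal_inf [set Cinf G | G in [set G | d_open G /\ E `<=` G]]
             <= c%:E * Cinf E)%E.
Definition quasiouter : Prop := exists2 c : R, 1 <= c & c_quasiouter c.
Definition outer_capacity : Prop := c_quasiouter 1.
Definition outer_for_zero_sets : Prop :=
  forall E, Cinf E = 0%E -> forall eps : R, 0 < eps ->
    exists G, [/\ d_open G, E `<=` G & (Cinf G < eps%:E)%E].

End mms.

Definition indicator_e {R : realType} {T : Type} (A : set T) : T -> \bar R :=
  fun x => (\1_A x : R)%:E.

(* Main.v *)
Require Import Defs.
From HB Require Import structures.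
From mathcomp Require Import all_boot all_order all_algebra.
From mathcomp Require Import all_classical all_reals all_analysis.
From mathcomp Require Import measurable_realfun ess_sup_inf.
From mathcomp Require Import lra.
Import Order.TTheory GRing.Theory Num.Theory.
Local Open Scope classical_set_scope.
Local Open Scope ring_scope.

Section proof.
Context {R : realType} {d0 : measure_display} {T : measurableType d0}.
Variables (dist : T -> T -> R) (mu : {measure set T -> \bar R}).
Hypothesis hmms : metric_measure_space dist mu.

Let Neg := mu.-negligible.

Lemma dist0 x : dist x x = 0.
Proof. by case: hmms => -[h _ _] _ _ _; apply/h. Qed.

Lemma open_meas U : d_open dist U -> measurable U.
Proof.
case: hmms => _ hB _ _ hU; apply: hB; exact: sub_sigma_algebra.
Qed.

Lemma dball_open x r : d_open dist (dball dist x r).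
Proof.
case: hmms => -[_ hs ht] _ _ _ y; rewrite /dball /= => hy.
exists (r - dist x y); first by rewrite subr_gt0.
move=> z; rewrite /dball /= => hz.
by apply: (le_lt_trans (ht x y z)); rewrite -ltrBrDl.
Qed.

Lemma open_nonneg U x : d_open dist U -> U x -> ~ Neg U.
Proof.
move=> hU Ux [A [mA A0 UA]].
have [r r0 hr] := hU x Ux.
case: hmms => _ _ _ /(_ x r r0) [hpos _].
have := le_measure mu (x:=dball dist x r) (y:=A).
rewrite !inE => /(_ (open_meas _ (dball_open x r)) mA (subset_trans hr UA)).
move=> hle; have h := lt_le_trans hpos hle; move/eqP: A0; by rewrite eq_le leNgt h.
Qed.

Lemma muT_gt0 : (0 < mu setT)%E.
Proof.
rewrite lt0e measure_ge0 andbT; apply/negP => /eqP h.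
have x : T := point.
apply: (open_nonneg setT x) => //.
  by move=> y _; exists 1 => //.
by exists setT; split => //; apply/eqP; rewrite h.
Qed.

Lemma mu_out_ge0 E : (0 <= mu_out mu E)%E.
Proof. by apply: le_ereal_inf_tmp => _ [A _ <-]; exact: measure_ge0. Qed.

Lemma neg_mu_out E : Neg E <-> mu_out mu E = 0%E.
Proof.
split.
  move=> [A [mA A0 EA]]; apply/eqP; rewrite eq_le mu_out_ge0 andbT.
  by apply: ge_ereal_inf; exists 0%E => //; exists A.
move=> h.
have hn n : exists A, [/\ measurable A, E `<=` A & (mu A < (n.+1%:R^-1)%:E)%E].
  have : (mu_out mu E < (n.+1%:R^-1 : R)%:E)%E by rewrite h lte_fin invr_gt0.
  by move/ereal_inf_lt => [_ [A [mA EA] <-] hA]; exists A.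
have [F hF] := choice hn.
exists (\bigcap_n F n); split.
- by apply: bigcapT_measurable => n; case: (hF n).
- apply/eqP; rewrite eq_le measure_ge0 andbT; apply/lee_addgt0Pr => e e0.
  rewrite add0e; set n := Num.Def.trunc (e^-1).
  case: (hF n) => mFn _ hlt.
  apply: le_trans (le_measure mu _ _ _) (ltW (lt_le_trans hlt _)).
  + by rewrite inE; apply: bigcapT_measurable => k; case: (hF k).
  + by rewrite inE.
  + exact: bigcap_inf.
  + rewrite lee_fin -[leRHS]invrK lef_pV2 ?posrE ?invr_gt0//.
    exact: ltW (truncnS_gt _).
- by move=> x Ex n _; case: (hF n) => _ /(_ x Ex).
Qed.


Local Open Scope ereal_scope.

Lemma Linf_ge0 u : 0 <= Linf_norm mu u.
Proof. by apply: ess_sup_gee; [exact: muT_gt0|apply: aeW => x; exact: abse_ge0]. Qed.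

Lemma Linf_lt_neg u c E : Linf_norm mu u < c ->
  (forall x, E x -> c <= `|u x|) -> Neg E.
Proof.
move=> hL hE; have := ess_sup_ge mu (fun x => `|u x|).
apply: negligibleS => x Ex /= hx.
have := le_lt_trans hx hL; by rewrite ltNge hE.
Qed.

Lemma Linf_neg u N : Neg N -> (forall x, ~ N x -> u x = 0) -> Linf_norm mu u <= 0.
Proof.
move=> hN h; rewrite /Linf_norm; apply/ess_supP; apply: negligibleS hN => x /= hx.
apply: contrapT => nx; apply: hx; by rewrite h // abse0.
Qed.

Variable rho : T -> \bar R.
Hypotheses (rhoB : borel_fun dist rho) (rho0 : forall x, 0 <= rho x)
  (rhoL : in_Linf mu rho)
  (rhoI : forall gamma l, arclength_curve dist gamma l -> line_integral gamma l rho = +oo).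

Lemma line_scale gamma l (k : R) : (0 < k)%R -> line_integral gamma l rho = +oo ->
  line_integral gamma l (fun x => k%:E * rho x) = +oo.
Proof.
move=> k0; rewrite /line_integral !ge0_integralE; last 2 first.
- by move=> t _; rewrite mule_ge0 // lee_fin ltW.
- by move=> t _.
move=> h; apply/eqP; rewrite eq_le leey /=.
rewrite -(gt0_mulye (x:=k%:E)) ?lte_fin // muleC -h -ereal_sup_pZl //.
apply: ereal_sup_le => _ [_ [f hf <-] <-].
exists (scale_nnsfun f (ltW k0)).
  move=> t /=; have := hf t; rewrite /patch; case: ifPn => _ ht.
    by rewrite EFinM lee_pmul2l // lte_fin.
  have p0 : (point : \bar R) = 0 := erefl.
  move: ht; rewrite p0 !lee_fin => ht.
  by rewrite pmulr_rle0.
by rewrite -sintegralrM.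
Qed.


Lemma ug_scale u (k : R) : (0 < k)%R -> upper_gradient dist u (fun x => k%:E * rho x).
Proof.
move=> k0; split.
- move=> B mB.
  have mf := @measurable_funeM _ (\bar R) R setT id k%:E (@measurable_id _ _ setT).
  have := mf measurableT B mB; rewrite setTI => hB.
  by have := rhoB _ hB.
- by move=> x; rewrite mule_ge0 // lee_fin ltW.
- move=> gamma l hg /=; split => _.
    by rewrite line_scale // ?leey // rhoI.
  by rewrite line_scale // rhoI.
Qed.

Lemma Linf_rho_fin : Linf_norm mu rho \is a fin_num.
Proof.
case: rhoL => _ hl; rewrite fin_numElt hl andbT.
exact: lt_le_trans (ltNyr 0%R) (Linf_ge0 _).
Qed.

Lemma grad_inf u : ereal_inf [set Linf_norm mu g | g in upper_gradient dist u] = 0.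
Proof.
apply/eqP; rewrite eq_le; apply/andP; split; last first.
  by apply: le_ereal_inf_tmp => _ [g _ <-]; exact: Linf_ge0.
apply/lee_addgt0Pr => e e0; rewrite add0e.
set r := fine (Linf_norm mu rho).
have r0 : (0 <= r)%R by rewrite /r fine_ge0 // Linf_ge0.
set k := (e / (r + 1))%R.
have k0 : (0 < k)%R by rewrite /k divr_gt0 // ltr_wpDl.
apply: ge_ereal_inf; exists (Linf_norm mu (fun x => k%:E * rho x)).
  by exists (fun x => k%:E * rho x) => //; exact: ug_scale.
have -> : Linf_norm mu (fun x => k%:E * rho x) = k%:E * Linf_norm mu rho.
  rewrite /Linf_norm -ess_sup_pZl //; congr ess_sup; apply/funext => x /=.
  by rewrite abseM gee0_abs // lee_fin ltW.
rewrite -(fineK Linf_rho_fin) -/r -EFinM lee_fin.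
rewrite /k mulrAC ler_pdivrMr ?ltr_wpDl //.
apply: ler_wpM2l; [exact: ltW | by rewrite lerDl].
Qed.

Lemma N1E u : N1inf_norm dist mu u = Linf_norm mu u.
Proof. by rewrite /N1inf_norm grad_inf adde0. Qed.

Lemma N1_Linf u : in_N1inf dist mu u <-> in_Linf mu u.
Proof. by split => [[]//|h]; split => //; rewrite N1E; case: h. Qed.


Lemma Linf_ind A : measurable A -> in_Linf mu (indicator_e A).
Proof.
move=> mA; split.
  by apply/measurable_EFinP; exact: measurable_indic.
apply: (@le_lt_trans _ _ 1%E); last exact: ltry.
rewrite /Linf_norm; apply/ess_supP; apply: aeW => x /=.
rewrite /indicator_e indicE; case: (x \in A) => /=; rewrite lee_fin ?normr1 ?normr0 //.

Qed.

Lemma Cinf_ge0 E : 0 <= Cinf dist mu E.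
Proof. by apply: le_ereal_inf_tmp => _ [u _ <-]; rewrite N1E Linf_ge0. Qed.

Lemma Cinf_neg E : Neg E -> Cinf dist mu E = 0.
Proof.
move=> hE; have [A [mA A0 EA]] := hE.
apply/eqP; rewrite eq_le Cinf_ge0 andbT.
apply: ge_ereal_inf; exists (N1inf_norm dist mu (indicator_e A)).
  exists (indicator_e A) => //; split; first by apply/N1_Linf; exact: Linf_ind.
  by move=> x /EA Ax; rewrite /indicator_e indicE mem_set.
rewrite N1E; apply: (Linf_neg (indicator_e A) A); first by exists A; split.
by move=> x nA; rewrite /indicator_e indicE memNset.
Qed.

Lemma Cinf_nneg E : ~ Neg E -> Cinf dist mu E = 1.
Proof.
move=> nE; apply/eqP; rewrite eq_le; apply/andP; split.
  apply: ge_ereal_inf; exists (N1inf_norm dist mu (cst 1)).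
    exists (cst 1) => //; split => //; apply/N1_Linf; split.
      exact: measurable_cst.
    apply: (@le_lt_trans _ _ 1%E); last exact: ltry.
    rewrite /Linf_norm; apply/ess_supP; apply: aeW => x /=. by rewrite lee_fin normr1.
  rewrite N1E /Linf_norm; apply/ess_supP; apply: aeW => x /=; by rewrite lee_fin normr1.
apply: le_ereal_inf_tmp => _ [u [hu hE] <-]; rewrite N1E leNgt; apply/negP => hl.
apply: nE; apply: (Linf_lt_neg _ _ _ hl) => x Ex.
exact: le_trans (hE x Ex) (lee_abs _).
Qed.

Lemma Cinf_lt1 E : Cinf dist mu E < 1 -> Neg E.
Proof.
move=> h; apply: contrapT => nE; move: h; by rewrite Cinf_nneg // ltxx.
Qed.

Lemma pos_mu_out E : (0 < mu_out mu E) <-> ~ Neg E.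
Proof.
split.
  by move=> h /neg_mu_out e; move: h; rewrite e ltxx.
move=> nE; rewrite lt0e mu_out_ge0 andbT; apply/negP => /eqP h.
by apply: nE; apply/neg_mu_out.
Qed.

Lemma open0 : d_open dist set0.
Proof. by []. Qed.

Lemma openT : d_open dist setT.
Proof. by move=> x _; exists 1%R. Qed.

Lemma openI U V : d_open dist U -> d_open dist V -> d_open dist (U `&` V).
Proof.
move=> hU hV x [Ux Vx].
have [r1 r10 h1] := hU x Ux; have [r2 r20 h2] := hV x Vx.
exists (Order.min r1 r2); first by rewrite lt_min r10 r20.
move=> y; rewrite /dball /= lt_min => /andP[y1 y2]; split.
  by apply: h1. by apply: h2.
Qed.

Lemma nE_empty E : Neg E -> d_open dist E -> forall x, ~ E x.
Proof. by move=> nE oE x Ex; exact: (open_nonneg E x oE Ex nE). Qed.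

Lemma ind_fine (A : set T) y : fine (indicator_e A y : \bar R) = (\1_A y : R)%R.
Proof. by []. Qed.

Lemma part2 A : (exists a, A a) -> Neg A ->
  [/\ in_N1inf dist mu (indicator_e A),
      weakly_quasicontinuous dist mu (indicator_e A) &
      ~ quasicontinuous dist mu (indicator_e A)].
Proof.
move=> [a Aa] nA.
have mA : measurable A by case: hmms => _ _ hc _; exact: hc.
split.
- by apply/N1_Linf; exact: Linf_ind.
- move=> eps eps0; exists A; split; first by rewrite Cinf_neg // lte_fin.
  split; first by move=> x _.
  move=> x nx e e0; exists 1%R => // y ny _.
  by rewrite !ind_fine !indicE !memNset // subrr normr0.
- move=> h; have [E [oE CE [_ cE]]] := h 1%R ltr01.
  have nE : Neg E by apply: Cinf_lt1.
  have noE := nE_empty _ nE oE.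
  have [del del0 hd] := cE a (noE a) (2^-1)%R ltac:(by rewrite invr_gt0).
  have [y [y1 y2]] : exists y, dball dist a del y /\ ~ A y.
    apply: contrapT => hn; apply: (open_nonneg _ a (dball_open a del)).
      by rewrite /dball /= dist0.
    apply: negligibleS nA => y yb; apply: contrapT => nAy; apply: hn; by exists y.
  have := hd y (noE y) y1.
  rewrite !ind_fine indicE memNset // indicE mem_set // sub0r normrN normr1.
  lra.
Qed.

Lemma part3 F : d_closed dist F ->
  (forall U, d_open dist U -> U `<=` F -> U = set0) -> ~ Neg F ->
  in_N1inf dist mu (indicator_e F) /\ ~ weakly_quasicontinuous dist mu (indicator_e F).
Proof.
move=> cF hint nF.
have mF : measurable F.
  by rewrite -(setCK F); apply: measurableC; exact: open_meas cF.
split; first by apply/N1_Linf; exact: Linf_ind.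
move=> h; have [E [CE [_ cE]]] := h 1%R ltr01.
have nE : Neg E by apply: Cinf_lt1.
have [x [Fx nEx]] : exists x, F x /\ ~ E x.
  apply: contrapT => hn; apply: nF; apply: negligibleS nE => x Fx.
  apply: contrapT => nEx; apply: hn; by exists x.
have [del del0 hd] := cE x nEx (2^-1)%R ltac:(by rewrite invr_gt0).
have oU : d_open dist (dball dist x del `&` ~` F) by apply: openI; [exact: dball_open|exact: cF].
have UE : dball dist x del `&` ~` F `<=` E.
  move=> y [y1 y2]; apply: contrapT => nEy.
  have := hd y nEy y1.
  rewrite !ind_fine indicE memNset // indicE mem_set // sub0r normrN normr1.
  lra.
have noU := nE_empty _ (negligibleS UE nE) oU.
have bF : dball dist x del `<=` F.
  move=> y yb; apply: contrapT => nFy; exact: (noU y).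
have e := hint _ (dball_open x del) bF.
have : dball dist x del x by rewrite /dball /= dist0.
by rewrite e.
Qed.


Lemma quasi_to_P c : c_quasiouter dist mu c -> forall x, ~ Neg [set x].
Proof.
move=> h x nx; have := h [set x]; rewrite Cinf_neg // mule0.
have ge1 : 1 <= ereal_inf [set Cinf dist mu G | G in [set G | d_open dist G /\ [set x] `<=` G]].
  apply: le_ereal_inf_tmp => _ [G [oG xG] <-]; rewrite Cinf_nneg //.
  exact: (open_nonneg G x oG (xG x erefl)).
move=> h0; have := le_trans ge1 h0; by rewrite lee_fin ler10.
Qed.

Lemma P_neg_empty : (forall x, ~ Neg [set x]) -> forall E, Neg E -> forall x, ~ E x.
Proof.
move=> hP E nE x Ex; apply: (hP x); apply: negligibleS nE; by move=> y ->.
Qed.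

Lemma Cinf0 : Cinf dist mu set0 = 0.
Proof. by rewrite Cinf_neg //; exact: negligible_set0. Qed.

Lemma CinfT : Cinf dist mu setT = 1.
Proof. by rewrite Cinf_nneg //; apply: (open_nonneg setT point) => //; exact: openT. Qed.

Lemma main :
  [/\ (forall u : T -> \bar R, in_N1inf dist mu u <-> in_Linf mu u),
      (forall E : set T,
         (mu_out mu E = 0%E -> Cinf dist mu E = 0%E) /\
         ((0 < mu_out mu E)%E -> Cinf dist mu E = 1%E)),
      (forall A : set T, A !=set0 -> mu_out mu A = 0%E ->
         [/\ in_N1inf dist mu (indicator_e A),
             weakly_quasicontinuous dist mu (indicator_e A) &
             ~ quasicontinuous dist mu (indicator_e A)]),
      (forall F : set T, d_closed dist F ->
         (forall U, d_open dist U -> U `<=` F -> U = set0) ->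
         (0 < mu_out mu F)%E ->
         in_N1inf dist mu (indicator_e F) /\
         ~ weakly_quasicontinuous dist mu (indicator_e F)) &
      let P := forall x : T, (0 < mu_out mu [set x])%E in
      [/\ P <-> outer_capacity dist mu,
          P <-> quasiouter dist mu,
          P <-> (forall u : T -> \bar R, weakly_quasicontinuous dist mu u ->
                                         quasicontinuous dist mu u),
          P <-> outer_for_zero_sets dist mu &
          P <-> (forall E : set T, E !=set0 -> (0 < Cinf dist mu E)%E)]].
Proof.
split.
- exact: N1_Linf.
- move=> E; split.
    by move/neg_mu_out; exact: Cinf_neg.
  by move/pos_mu_out; exact: Cinf_nneg.
- by move=> A hA /neg_mu_out nA; exact: part2.
- by move=> F cF hint /pos_mu_out nF; exact: part3.
move=> P.
have PE : P <-> (forall x, ~ Neg [set x]).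
  by split => h x; [apply/pos_mu_out|apply/pos_mu_out].
split.
- rewrite PE; split; last exact: quasi_to_P.
  move=> hP E; rewrite mul1e.
  have [nE|nE] := pselect (Neg E).
    rewrite Cinf_neg //; apply: ge_ereal_inf; exists 0 => //.
    exists set0 => //; last exact: Cinf0.
    by split; [exact: open0 | move=> x Ex; exact: (P_neg_empty hP _ nE _ Ex)].
  rewrite Cinf_nneg //; apply: ge_ereal_inf; exists 1 => //.
  by exists setT => //; [split; [exact: openT|by []] | exact: CinfT].
- rewrite PE; split; last by move=> [c _ /quasi_to_P].
  move=> hP; exists 1%R => //.
  move=> E; rewrite mul1e.
  have [nE|nE] := pselect (Neg E).
    rewrite Cinf_neg //; apply: ge_ereal_inf; exists 0 => //.
    exists set0 => //; last exact: Cinf0.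
    by split; [exact: open0 | move=> x Ex; exact: (P_neg_empty hP _ nE _ Ex)].
  rewrite Cinf_nneg //; apply: ge_ereal_inf; exists 1 => //.
  by exists setT => //; [split; [exact: openT|by []] | exact: CinfT].
- rewrite PE; split.
    move=> hP u hu eps eps0; have [E [CE cE]] := hu eps eps0.
    have [nE|nE] := pselect (Neg E).
      exists E; split => //.
      by move=> x Ex; exfalso; exact: (P_neg_empty hP _ nE _ Ex).
    exists setT; split; first exact: openT.
      by rewrite CinfT; move: CE; rewrite Cinf_nneg.
    by split => x /(_ I).
  move=> h x nx.
  have [_ hw hq] := part2 [set x] (ex_intro _ x erefl) nx.
  exact: hq (h _ hw).
- rewrite PE; split.
    move=> hP E CE eps eps0; exists set0; split; first exact: open0.
      have nE : Neg E.
        apply: contrapT => nE; move: CE; rewrite Cinf_nneg // => /eqP.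
        by rewrite onee_eq0.
      by move=> y Ey; exact: (P_neg_empty hP _ nE _ Ey).
    by rewrite Cinf0 lte_fin.
  move=> h x nx; have [G [oG xG CG]] := h [set x] (Cinf_neg _ nx) 1%R ltr01.
  have nG := Cinf_lt1 _ CG.
  exact: (open_nonneg G x oG (xG x erefl) nG).
- rewrite PE; split.
    by move=> hP E [x Ex]; rewrite Cinf_nneg // => nE; exact: (P_neg_empty hP _ nE _ Ex).
  by move=> h x nx; have := h [set x] (ex_intro _ x erefl); rewrite Cinf_neg // ltxx.
Qed.

End proof.

Theorem theorem6p2 (R : realType) (d0 : measure_display) (T : measurableType d0)
  (dist : T -> T -> R) (mu : {measure set T -> \bar R}) :
  metric_measure_space dist mu ->
  Linf_modulus_zero dist mu (arclength_curve dist) ->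
  [/\ (forall u : T -> \bar R, in_N1inf dist mu u <-> in_Linf mu u),
      (* (I) *)
      (forall E : set T,
         (mu_out mu E = 0%E -> Cinf dist mu E = 0%E) /\
         ((0 < mu_out mu E)%E -> Cinf dist mu E = 1%E)),
      (* (II) *)
      (forall A : set T, A !=set0 -> mu_out mu A = 0%E ->
         [/\ in_N1inf dist mu (indicator_e A),
             weakly_quasicontinuous dist mu (indicator_e A) &
             ~ quasicontinuous dist mu (indicator_e A)]),
      (* (III) *)
      (forall F : set T, d_closed dist F ->
         (forall U, d_open dist U -> U `<=` F -> U = set0) ->
         (0 < mu_out mu F)%E ->
         in_N1inf dist mu (indicator_e F) /\
         ~ weakly_quasicontinuous dist mu (indicator_e F)) &
      (* equivalences *)
      let P := forall x : T, (0 < mu_out mu [set x])%E in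
      [/\ P <-> outer_capacity dist mu,
          P <-> quasiouter dist mu,
          P <-> (forall u : T -> \bar R, weakly_quasicontinuous dist mu u ->
                                         quasicontinuous dist mu u),
          P <-> outer_for_zero_sets dist mu &
          P <-> (forall E : set T, E !=set0 -> (0 < Cinf dist mu E)%E)]].
Proof.
move=> hm [rho [rB r0 rL rI]].
exact: (@main R d0 T dist mu hm rho rB r0 rL rI).
Qed.
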